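(* Let $S$ be a $\mathcal{C}$-semigroup with $S\ne\mathcal{C}$ and genus $g$. Then $S$ is pseudo-symmetric if and only if $2g=1+\mathcal{F}(S)$ and $F(S)/2\in\mathbb{N}^p$.
   Context: An integer cone $\mathcal{C}\subseteq\mathbb{N}^p$ is the set of integer points of a finitely generated rational cone in $\mathbb{Q}_{\ge0}^p$. A $\mathcal{C}$-semigroup is a subset $S\subseteq\mathcal{C}$ containing $0$, closed under addition, with $\mathcal{C}\setminus S$ finite; $\mathcal{H}(S)=\mathcal{C}\setminus S$, $g=g(S)=\#\mathcal{H}(S)$. A monomial order $\preceq$ on $\mathbb{N}^p$ is fixed (total order, compatible with addition, $\mathbf 0\preceq\mathbf c$ for all $\mathbf c$), and $F(S)=\max_\preceq\mathcal{H}(S)$. $\mathrm{PF}(S)=\{\mathbf x\in\mathcal{H}(S)\mid \mathbf x+(S\setminus\{0\})\subseteq S\}$; $S$ is pseudo-symmetric if $\mathrm{PF}(S)=\{F(S),F(S)/2\}$. $\mathbf x\le_{\mathcal{C}}\mathbf y$ means $\mathbf y-\mathbf x\in\mathcal{C}$; $I_S(\mathbf n)=\{\mathbf s\in S\mid \mathbf s\le_{\mathcal{C}}\mathbf n\}$. The generalized Frobenius number is $\mathcal{F}(S)=\#I_S(F(S))+g(S)$. *)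

(* Defs.v *)
From HB Require Import structures.
From mathcomp Require Import all_boot all_order all_algebra.
Set Implicit Arguments. Unset Strict Implicit. Unset Printing Implicit Defensive.
Import Order.TTheory GRing.Theory Num.Theory.

Definition vec (p : nat) := {ffun 'I_p -> nat}.
Definition vadd p (x y : vec p) : vec p := [ffun i => x i + y i].
Definition vzero p : vec p := [ffun => 0%N].

(* C is the set of integer points of a finitely generated rational cone
   contained in Q_{>=0}^p: there are generators G_0..G_{k-1} in Q_{>=0}^p
   such that x in N^p lies in C iff x = sum_j lam_j G_j with lam_j in Q_{>=0}. *)
Definition integer_cone p (C : vec p -> Prop) : Prop :=
  exists (k : nat) (G : 'I_k -> 'I_p -> rat),
    (forall j i, (0 <= G j i)%R) /\
    forall x : vec p, C x <->
      exists lam : 'I_k -> rat, (forall j, (0 <= lam j)%R) /\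
        forall i, ((x i)%:R = \sum_(j < k) lam j * G j i)%R.

Definition monomial_order p (le : vec p -> vec p -> Prop) : Prop :=
  [/\ (forall x, le x x) /\
      (forall x y, le x y -> le y x -> x = y),
      (forall x y z, le x y -> le y z -> le x z),
      (forall x y, le x y \/ le y x),
      (forall x y z, le x y -> le (vadd x z) (vadd y z))
    & (forall x, le (vzero p) x)].

Definition gaps p (C S : vec p -> Prop) (x : vec p) : Prop := C x /\ ~ S x.

Definition C_semigroup p (C S : vec p -> Prop) : Prop :=
  [/\ (forall x, S x -> C x),
      S (vzero p),
      (forall x y, S x -> S y -> S (vadd x y))
    & exists s : seq (vec p), forall x, gaps C S x -> x \in s].

Definition card_is p (A : vec p -> Prop) (n : nat) : Prop :=
  exists s : seq (vec p), [/\ uniq s, (forall x, x \in s <-> A x) & size s = n].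

Definition is_frobenius p (C S : vec p -> Prop) (le : vec p -> vec p -> Prop)
  (f : vec p) : Prop :=
  gaps C S f /\ forall h, gaps C S h -> le h f.

Definition PF p (C S : vec p -> Prop) (x : vec p) : Prop :=
  gaps C S x /\ forall s, S s -> s <> vzero p -> S (vadd x s).

Definition le_C p (C : vec p -> Prop) (x y : vec p) : Prop :=
  exists z, C z /\ y = vadd x z.

Definition I_S p (C S : vec p -> Prop) (n : vec p) (s : vec p) : Prop :=
  S s /\ le_C C s n.

(* S pseudo-symmetric (w.r.t. its Frobenius element f): PF(S) = {f, f/2},
   where f/2 is the element h of N^p with h + h = f. *)
Definition pseudo_symmetric p (C S : vec p -> Prop) (f : vec p) : Prop :=
  exists h : vec p, vadd h h = f /\ forall x, PF C S x <-> (x = f \/ x = h).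

(* Main.v *)
Require Import Defs.
From mathcomp Require Import all_boot all_order all_algebra.
From mathcomp Require Import zify ring.
From Stdlib Require Import Classical.
Set Implicit Arguments. Unset Strict Implicit. Unset Printing Implicit Defensive.
Import Order.TTheory GRing.Theory Num.Theory.

Lemma vec_ext p (x y : vec p) : (forall i, @eq nat (x i) (y i)) -> x = y.
Proof. by move=> H; apply/ffunP. Qed.
Lemma vec_at p (x y : vec p) : x = y -> forall i, @eq nat (x i) (y i).
Proof. by move=> ->. Qed.
Lemma vaddE p (x y : vec p) i : @eq nat (vadd x y i) (x i + y i).
Proof. by rewrite /vadd ffunE. Qed.
Lemma vzeroE p i : @eq nat (vzero p i) 0.
Proof. by rewrite /vzero ffunE. Qed.

Lemma vaddC p (x y : vec p) : vadd x y = vadd y x.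
Proof. apply: vec_ext=> i; rewrite !vaddE; lia. Qed.
Lemma vaddA p (x y z : vec p) : vadd x (vadd y z) = vadd (vadd x y) z.
Proof. apply: vec_ext=> i; rewrite !vaddE; lia. Qed.
Lemma vadd0 p (x : vec p) : vadd x (vzero p) = x.
Proof. apply: vec_ext=> i; rewrite !vaddE vzeroE; lia. Qed.
Lemma vaddI p (x y z : vec p) : vadd x y = vadd x z -> y = z.
Proof. move=> /vec_at H; apply: vec_ext=> i; move: (H i); rewrite !vaddE; lia. Qed.
Lemma vadd_eq_l p (x y : vec p) : vadd x y = x -> y = vzero p.
Proof. move=> /vec_at H; apply: vec_ext=> i; move: (H i); rewrite !vaddE vzeroE; lia. Qed.
Definition vsub p (x y : vec p) : vec p := [ffun i => x i - y i].
Lemma vsub_add p (x z : vec p) : vsub (vadd x z) x = z.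
Proof. apply: vec_ext=> i; rewrite /vsub ffunE !vaddE; lia. Qed.

Lemma list_max p (le : vec p -> vec p -> Prop) (P : vec p -> Prop) (l : seq (vec p)) :
  (forall x, le x x) ->
  (forall x y, le x y \/ le y x) -> (forall x y z, le x y -> le y z -> le x z) ->
  (exists x, x \in l /\ P x) -> exists y, P y /\ forall z, z \in l -> P z -> le z y.
Proof.
move=> refl tot trans; elim: l => [|a l IH] [x [Hx Px]]; first by [].
case: (classic (exists x, x \in l /\ P x)) => [E|NE].
- have [y [Py Hy]] := IH E.
  case: (classic (P a)) => Pa.
  + case: (tot a y) => Hay.
    * exists y; split => // z; rewrite in_cons => /orP [/eqP -> _ //|]; exact: Hy.
    * exists a; split => // z; rewrite in_cons => /orP [/eqP -> _ //|zl Pz].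
      exact: trans (Hy z zl Pz) Hay.
  + exists y; split => // z; rewrite in_cons => /orP [/eqP -> Pa'|]; last exact: Hy.
    by exfalso; exact: Pa Pa'.
- have Pa : P a.
    move: Hx; rewrite in_cons => /orP [/eqP <- //|xl].
    by exfalso; apply NE; exists x.
  exists a; split => // z; rewrite in_cons => /orP [/eqP -> _ //|zl Pz].
  by exfalso; apply NE; exists z.
Qed.

Lemma card_eq p (A : vec p -> Prop) g (L : seq (vec p)) :
  card_is A g -> uniq L -> (forall x, x \in L <-> A x) -> size L = g.
Proof.
case=> s [us Hs <-] uL HL. apply: perm_size. apply: uniq_perm => // x.
by apply/idP/idP => H; [apply/Hs; apply/HL | apply/HL; apply/Hs].
Qed.

Lemma card_full p (A : vec p -> Prop) g (L : seq (vec p)) :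
  card_is A g -> uniq L -> (forall x, x \in L -> A x) -> size L = g ->
  forall x, A x -> x \in L.
Proof.
case=> s [us Hs <-] uL HL sz x Ax.
have [_ E] := uniq_min_size uL (fun y yL => proj2 (Hs y) (HL y yL)) (eq_leq (esym sz)).
by rewrite (E x); apply/Hs.
Qed.

Lemma cone_add p (C : vec p -> Prop) x y :
  integer_cone C -> C x -> C y -> C (vadd x y).
Proof.
case=> k [G [G0 HC]] /HC [l1 [l10 H1]] /HC [l2 [l20 H2]].
apply/HC; exists (fun j => l1 j + l2 j)%R; split.
- by move=> j; rewrite addr_ge0.
- move=> i; rewrite /vadd ffunE natrD H1 H2 -big_split /=.
  by apply: eq_bigr => j _; rewrite mulrDl.
Qed.

Lemma cone_half p (C : vec p -> Prop) h :
  integer_cone C -> C (vadd h h) -> C h.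
Proof.
case=> k [G [G0 HC]] /HC [l [l0 H]].
apply/HC; exists (fun j => l j / 2)%R; split.
- by move=> j; rewrite divr_ge0.
- move=> i; move: (H i); rewrite /vadd ffunE natrD => E.
  have -> : ((h i)%:R = ((h i)%:R + (h i)%:R) / 2 :> rat)%R by field.
  by rewrite E mulr_suml; apply: eq_bigr => j _; rewrite mulrAC.
Qed.

Theorem mainTheorem7 (p : nat) (C S : vec p -> Prop)
  (le : vec p -> vec p -> Prop) (f : vec p) (g n : nat) :
  integer_cone C -> monomial_order le -> C_semigroup C S ->
  (exists x, C x /\ ~ S x) ->
  is_frobenius C S le f ->
  card_is (gaps C S) g ->
  card_is (I_S C S f) n ->
  (pseudo_symmetric C S f <->
     (2 * g = 1 + (n + g))%N /\ exists h : vec p, vadd h h = f).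
Proof.
move=> cone [[refl antis] trans tot comp zmin] [SC S0 Sadd _] _ [[Cf nSf] fmax] Hg Hn.
have Hn' := Hn; case: Hn' => sI [usI HsI szI].
have Hg' := Hg; case: Hg' => sg [usg Hsg szg].
have le_add : forall y s, le y (vadd y s).
  move=> y s; have := comp _ _ y (zmin s); by rewrite vaddC (vaddC s) vadd0.
have gap_sub : forall s, I_S C S f s -> gaps C S (vsub f s) /\ vadd s (vsub f s) = f.
  move=> s [Ss [z [Cz Ef]]]; rewrite Ef vsub_add; split => //; split => // Sz.
  by apply: nSf; rewrite Ef; apply: Sadd.
have sub_inj : forall s1 s2, I_S C S f s1 -> I_S C S f s2 -> vsub f s1 = vsub f s2 -> s1 = s2.
  move=> s1 s2 /gap_sub [_ E1] /gap_sub [_ E2] E.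
  by apply: (@vaddI _ (vsub f s1)); rewrite vaddC E1 E vaddC E2.
have Lprops : forall h, vadd h h = f -> gaps C S h ->
    uniq (h :: map (vsub f) sI) /\ forall x, x \in h :: map (vsub f) sI -> gaps C S x.
  move=> h Eh [Ch nSh]; split.
  - rewrite cons_uniq (map_inj_in_uniq (f := vsub f)) ?usI ?andbT.
    + apply/mapP => -[s /HsI Is Ehs].
      have [_ E] := gap_sub s Is; rewrite -Ehs -Eh vaddC in E.
      by apply: nSh; have <- := vaddI E; case: Is.
    + by move=> s1 s2 /HsI ? /HsI ?; apply: sub_inj.
  - move=> x; rewrite in_cons => /orP [/eqP -> //|/mapP [s /HsI Is ->]].
    exact: (gap_sub s Is).1.
split.
- move=> [h [Eh HPF]]; split; last by exists h.
  have [gh _] : PF C S h by apply/HPF; right.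
  have [uL L_gap] := Lprops h Eh gh.
  suff : size (h :: map (vsub f) sI) = g by rewrite /= size_map szI; lia.
  apply: (card_eq Hg uL) => x; split; first exact: L_gap.
  move=> gx.
  have [y [[gy [t [St Ey]]] ymax]] := list_max (l := sg)
    (P := fun y => gaps C S y /\ exists t, S t /\ y = vadd x t) refl tot trans
    (ex_intro _ x (conj (proj2 (Hsg x) gx) (conj gx (ex_intro _ (vzero p) (conj S0 (esym (vadd0 x))))))).
  have PFy : PF C S y.
    split => // s Ss s0; apply: NNPP => nS.
    have gys : gaps C S (vadd y s) by split => //; apply: cone_add => //; [case: gy | exact: SC].
    have Eq : vadd y s = vadd x (vadd t s) by rewrite Ey vaddA.
    have H := ymax _ (proj2 (Hsg _) gys) (conj gys (ex_intro _ (vadd t s) (conj (Sadd _ _ St Ss) Eq))).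
    by apply: s0; apply: (@vadd_eq_l _ y); apply: antis; [exact: H | exact: le_add].
  case/HPF: PFy => [Eyf|Eyh].
  + rewrite in_cons; apply/orP; right; apply/mapP; exists t.
      apply/HsI; split => //; exists x; split; first by case: gx.
      by rewrite -Eyf Ey vaddC.
    by rewrite -Eyf Ey vaddC vsub_add.
  + case: (classic (t = vzero p)) => [t0|t0].
      by rewrite in_cons -Eyh Ey t0 vadd0 eqxx.
    have Sht : S (vadd h t) := (proj2 (proj2 (HPF h) (or_intror erefl))) t St t0.
    have Ef : f = vadd (vadd h t) x by rewrite -Eh -{1}Eyh Ey; apply: vec_ext => i; rewrite !vaddE; lia.
    rewrite in_cons; apply/orP; right; apply/mapP; exists (vadd h t).
      apply/HsI; split => //; exists x; split => //; by case: gx.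
    by rewrite Ef vsub_add.
- move=> [Egn [h Eh]].
  have Ch : C h by apply: (cone_half cone); rewrite Eh.
  have nSh : ~ S h by move=> Sh; apply: nSf; rewrite -Eh; apply: Sadd.
  have gh : gaps C S h by [].
  have [uL L_gap] := Lprops h Eh gh.
  have inL := card_full Hg uL L_gap ltac:(rewrite /= size_map szI; lia).
  exists h; split => // x; split.
  + move=> [gx PFx]; move: (inL x gx); rewrite in_cons => /orP [/eqP ->|/mapP [s /HsI Is Ex]].
      by right.
    have [_ E] := gap_sub s Is.
    case: (classic (s = vzero p)) => [s0|s0].
      by left; rewrite -E Ex s0 vaddC vadd0.
    exfalso; apply: nSf; rewrite -E vaddC -Ex; apply: PFx => //; by case: Is.
  + move=> [->|->]; split => //.
    * move=> s Ss s0; apply: NNPP => nS.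
      have gfs : gaps C S (vadd f s) by split => //; apply: cone_add => //; exact: SC.
      by apply: s0; apply: vadd_eq_l; apply: antis (fmax _ gfs) (le_add _ _).
    * move=> s Ss s0; apply: NNPP => nS.
      have ghs : gaps C S (vadd h s) by split => //; apply: cone_add => //; exact: SC.
      move: (inL _ ghs); rewrite in_cons => /orP [/eqP E|/mapP [t /HsI It Et]].
        by apply: s0; apply: (vadd_eq_l E).
      have [_ E] := gap_sub t It.
      rewrite -Et -Eh vaddA (vaddC t h) -vaddA in E.
      apply: nSh; rewrite -(vaddI E); apply: Sadd => //; by case: It.
Qed.
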